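(* Let $(G,\cdot,N,\star,\odot)$ be a left skew bracoid and $(H,\circ)$ a group. Assume $\boxdot$ is a transitive right action of $(H,\circ)$ on $N$ such that $g\odot(\eta\boxdot h)=(g\odot\eta)\boxdot h$ for all $g\in G$, $h\in H$, $\eta\in N$. Then for all $g\in G$, $\eta\in N$, $h\in H$, $$(g\odot\eta)^{\beta(h)}=({}^{\alpha(g)}(\eta^{\beta(h)}))\star(\eta^{\beta(h)})\star({}^{\alpha(g)}(e_N\boxdot h)).$$
   Context: For a group $(N,\star)$, $e_N$ denotes its identity and $\overline{\eta}$ the inverse of $\eta$. A left skew bracoid is $(G,\cdot,N,\star,\odot)$ with $(G,\cdot),(N,\star)$ groups and $\odot$ a transitive left action of $G$ on $N$ with $g\odot(\mu\star\eta)=(g\odot\mu)\star\overline{(g\odot e_N)}\star(g\odot\eta)$ for all $g\in G$, $\mu,\eta\in N$. For $g\in G$, ${}^{\alpha(g)}\eta=\overline{(g\odot e_N)}\star(g\odot\eta)\star\overline{\eta}$. For $h\in H$, $\eta^{\beta(h)}=\overline{\eta}\star(\eta\boxdot h)\star\overline{(e_N\boxdot h)}$. *)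

(* Defs.v *)
Set Implicit Arguments.

Record is_group (T : Type) (op : T -> T -> T) (e : T) (inv : T -> T) : Prop := {
  grp_assoc : forall x y z, op x (op y z) = op (op x y) z;
  grp_idl   : forall x, op e x = x;
  grp_idr   : forall x, op x e = x;
  grp_invl  : forall x, op (inv x) x = e;
  grp_invr  : forall x, op x (inv x) = e
}.

Definition is_left_action (G N : Type) (mulG : G -> G -> G) (eG : G)
  (act : G -> N -> N) : Prop :=
  (forall x, act eG x = x) /\
  (forall g g' x, act (mulG g g') x = act g (act g' x)).

Definition left_transitive (G N : Type) (act : G -> N -> N) : Prop :=
  forall x y : N, exists g : G, act g x = y.

Definition is_right_action (H N : Type) (mulH : H -> H -> H) (eH : H)
  (ract : N -> H -> N) : Prop :=
  (forall x, ract x eH = x) /\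
  (forall h h' x, ract x (mulH h h') = ract (ract x h) h').

Definition right_transitive (H N : Type) (ract : N -> H -> N) : Prop :=
  forall x y : N, exists h : H, ract x h = y.

Definition is_left_skew_bracoid (G N : Type)
  (mulG : G -> G -> G) (eG : G) (invG : G -> G)
  (star : N -> N -> N) (eN : N) (invN : N -> N)
  (act : G -> N -> N) : Prop :=
  is_group mulG eG invG /\ is_group star eN invN /\
  is_left_action mulG eG act /\ left_transitive act /\
  (forall g mu eta,
     act g (star mu eta) = star (star (act g mu) (invN (act g eN))) (act g eta)).

Definition alpha (G N : Type) (star : N -> N -> N) (eN : N) (invN : N -> N)
  (act : G -> N -> N) (g : G) (eta : N) : N :=
  star (star (invN (act g eN)) (act g eta)) (invN eta).

Definition beta (H N : Type) (star : N -> N -> N) (eN : N) (invN : N -> N)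
  (ract : N -> H -> N) (h : H) (eta : N) : N :=
  star (star (invN eta) (ract eta h)) (invN (ract eN h)).

(* Main.v *)
Require Import Defs.

Theorem proposition3p4
  (G N H : Type)
  (mulG : G -> G -> G) (eG : G) (invG : G -> G)
  (star : N -> N -> N) (eN : N) (invN : N -> N)
  (act : G -> N -> N)
  (mulH : H -> H -> H) (eH : H) (invH : H -> H)
  (ract : N -> H -> N) :
  is_left_skew_bracoid mulG eG invG star eN invN act ->
  is_group mulH eH invH ->
  is_right_action mulH eH ract ->
  right_transitive ract ->
  (forall g h eta, act g (ract eta h) = ract (act g eta) h) ->
  forall (g : G) (eta : N) (h : H),
    beta star eN invN ract h (act g eta) =
    star (star (alpha star eN invN act g (beta star eN invN ract h eta))
               (beta star eN invN ract h eta))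
         (alpha star eN invN act g (ract eN h)).
Proof.
  intros [HG [HN [HA [HT Hbr]]]] _ _ _ Hc g eta h.
  destruct HN as [Ass idl idr invl invr].
  unfold beta, alpha. rewrite <- Hc.
  set (E := ract eN h). set (P := ract eta h).
  set (b := star (star (invN eta) P) (invN E)).
  assert (Hinv : invN (act g eta) = star (star (invN (act g eN)) (act g (invN eta))) (invN (act g eN))).
  { set (y := star (star (invN (act g eN)) (act g (invN eta))) (invN (act g eN))).
    assert (Hy : star y (act g eta) = eN).
    { unfold y. rewrite <- !Ass, (Ass (act g (invN eta))), <- Hbr, invl. apply invl. }
    rewrite <- (idl (invN (act g eta))), <- Hy, <- Ass, invr, idr. reflexivity. }
  assert (S1 : star (star (star (invN (act g eN)) (act g b)) (invN b)) b = star (invN (act g eN)) (act g b)).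
  { rewrite <- Ass, invl, idr. reflexivity. }
  rewrite S1.
  assert (S3 : star b E = star (invN eta) P).
  { unfold b. rewrite <- Ass, invl, idr. reflexivity. }
  assert (S2 : star (star (act g b) (invN (act g eN))) (act g E) =
               star (star (act g (invN eta)) (invN (act g eN))) (act g P)).
  { rewrite <- Hbr, S3, Hbr. reflexivity. }
  rewrite Hinv.
  rewrite <- !Ass.
  rewrite (Ass (act g b)), (Ass (star (act g b) (invN (act g eN)))), S2.
  rewrite <- !Ass. reflexivity.
Qed.
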